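(* For all formulas $\phi,\psi$ of $\mathsf{JRC}$: if $\models_{\mathsf{JRC}}\phi\rightsquigarrow\psi$, then $\phi$ and $\psi$ have at least one atomic proposition in common.
   Context: Language of $\mathsf{JRC}$: countable sets $\mathsf{Var}$ (justification variables) and $\mathsf{Prop}$ (atoms). Terms $t ::= x \mid t+t$ ($x\in\mathsf{Var}$); formulas $\phi ::= p \mid {\sim}\phi \mid \phi\wedge\phi \mid \phi\to\phi \mid \phi\rightsquigarrow\phi \mid t{:}\phi$. A Routley relational model is $\mathcal M=(W,W_N,R,R_{Fm},R_{Tm},{*},\mathcal V)$ where $W$ is nonempty, $W_N\subseteq W$ nonempty (normal states); $R\subseteq W\times W\times W$ satisfies: for $w\in W_N$, $Rwvu$ iff $v=u$; $R_{Fm}$ assigns to each formula $\phi$ a relation $R_\phi\subseteq W\times W$; $R_{Tm}$ assigns to each term $t$ a relation $R_t\subseteq W\times W$; ${*}:W\to W$ with $w^{**}=w$; $\mathcal V:\mathsf{Prop}\to\mathcal P(W)$. $R_\phi(w)$, $R_t(w)$ are successor sets. Truth at every $w\in W$: $p$ iff $w\in\mathcal V(p)$; ${\sim}\phi$ iff $w^*\not\models\phi$; $\phi\wedge\psi$ iff both; $\phi\to\psi$ iff for all $v,u$ with $Rwvu$, $v\models\phi$ implies $u\models\psi$; $\phi\rightsquigarrow\psi$ iff $R_\phi(w)\subseteq[\psi]$; $t{:}\phi$ iff $R_t(w)\subseteq[\phi]$; here $[\phi]=\{w\in W:w\models\phi\}$. A $\mathsf{JRC}$-model is a Routley relational model with: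 (1) $R_\phi(w)\subseteq[\phi]$ for all $w\in W_N$ and all $\phi$; (2) for all $w\in W$, if $w\in[\phi]$ then $w\in R_\phi(w)$; (3) $R_{s+t}\subseteq R_s\cap R_t$ for all $s,t$. $\models_{\mathsf{JRC}}\phi$ iff $\phi$ is true at every normal state of every $\mathsf{JRC}$-model. *)

(* Defs.v *)
From Stdlib Require Import List.

Definition var := nat.
Definition atom := nat.

Inductive term : Type :=
| TVar : var -> term
| TPlus : term -> term -> term.

Inductive form : Type :=
| FAtom : atom -> form
| FNeg : form -> form
| FAnd : form -> form -> form
| FImp : form -> form -> form
| FRel : form -> form -> form    (* phi ~> psi (relevant/reason implication) *)
| FJust : term -> form -> form.

Fixpoint atoms (f : form) : list atom :=
  match f with
  | FAtom p => p :: nil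
  | FNeg a => atoms a
  | FAnd a b => atoms a ++ atoms b
  | FImp a b => atoms a ++ atoms b
  | FRel a b => atoms a ++ atoms b
  | FJust _ a => atoms a
  end.

Record model : Type := {
  W : Type;
  WN : W -> Prop;
  WN_nonempty : exists w, WN w;
  R : W -> W -> W -> Prop;
  R_normal : forall w v u, WN w -> (R w v u <-> v = u);
  RFm : form -> W -> W -> Prop;
  RTm : term -> W -> W -> Prop;
  star : W -> W;
  star_invol : forall w, star (star w) = w;
  V : atom -> W -> Prop
}.

Fixpoint sat (M : model) (w : W M) (f : form) : Prop :=
  match f with
  | FAtom p => V M p w
  | FNeg a => ~ sat M (star M w) a
  | FAnd a b => sat M w a /\ sat M w b
  | FImp a b => forall v u, R M w v u -> sat M v a -> sat M u b
  | FRel a b => forall v, RFm M a w v -> sat M v b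
  | FJust t a => forall v, RTm M t w v -> sat M v a
  end.

Definition JRC_model (M : model) : Prop :=
  (forall w phi v, WN M w -> RFm M phi w v -> sat M v phi) /\
  (forall w phi, sat M w phi -> RFm M phi w w) /\
  (forall s t w v, RTm M (TPlus s t) w v -> RTm M s w v /\ RTm M t w v).

Definition JRC_valid (phi : form) : Prop :=
  forall M : model, JRC_model M -> forall w : W M, WN M w -> sat M w phi.

(* Main.v *)
Require Import Defs.
From Stdlib Require Import List Classical.

Inductive W5 : Type := wN | wA | wB.

Section Counter.
Variable phi : form.

Definition st (w : W5) : W5 := match w with wN => wN | wA => wB | wB => wA end.
Definition Rr (w v u : W5) : Prop :=
  match w with wN => v = u | wA => v = wB /\ u = wA | wB => v = wA /\ u = wB end.
Definition rf (a : form) (ta : W5 -> Prop) (w v : W5) : Prop :=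
  match w with
  | wN => (v = wN /\ ta wN) \/ (a = phi /\ v = wA)
  | wA => v = wA
  | wB => v = wB
  end.
Definition val (p : atom) (w : W5) : Prop :=
  match w with wN => False | wA => In p (atoms phi) | wB => ~ In p (atoms phi) end.

Fixpoint tt (f : form) (w : W5) : Prop :=
  match f with
  | FAtom p => val p w
  | FNeg a => ~ tt a (st w)
  | FAnd a b => tt a w /\ tt b w
  | FImp a b => forall v u, Rr w v u -> tt a v -> tt b u
  | FRel a b => forall v, rf a (tt a) w v -> tt b v
  | FJust _ a => forall v, v = w -> tt a v
  end.

Lemma Rr_normal : forall w v u, w = wN -> (Rr w v u <-> v = u).
Proof. intros w v u ->; simpl; tauto. Qed.
Lemma st_invol : forall w, st (st w) = w.
Proof. destruct w; reflexivity. Qed.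
Lemma ne : exists w, w = wN.
Proof. eauto. Qed.

Definition CM : model :=
  {| W := W5; WN := fun w => w = wN; WN_nonempty := ne; R := Rr;
     R_normal := Rr_normal; RFm := fun a => rf a (tt a);
     RTm := fun _ w v => v = w; star := st; star_invol := st_invol; V := val |}.

Lemma sat_tt : forall f w, sat CM w f <-> tt f w.
Proof.
  induction f; intros w; simpl.
  - tauto.
  - rewrite IHf; tauto.
  - rewrite IHf1, IHf2; tauto.
  - split; intros H v u Hr Ha; apply IHf2; apply (H v u Hr); apply IHf1; auto.
  - split; intros H v Hr; apply IHf2; apply H; auto.
  - split; intros H v Hr; apply IHf; apply H; auto.
Qed.

Lemma purity : forall chi,
  ((forall p, In p (atoms chi) -> In p (atoms phi)) -> tt chi wA /\ ~ tt chi wB) /\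
  ((forall p, In p (atoms chi) -> ~ In p (atoms phi)) -> ~ tt chi wA /\ tt chi wB).
Proof.
  induction chi; simpl.
  - split; intros H; specialize (H a (or_introl eq_refl)); tauto.
  - destruct IHchi as [H1 H2]; split; intros H; [destruct (H1 H)|destruct (H2 H)]; tauto.
  - destruct IHchi1 as [H1 H2], IHchi2 as [H3 H4]; split; intros H.
    + assert (K1 := H1 (fun p Hp => H p (in_or_app _ _ _ (or_introl Hp)))).
      assert (K2 := H3 (fun p Hp => H p (in_or_app _ _ _ (or_intror Hp)))). tauto.
    + assert (K1 := H2 (fun p Hp => H p (in_or_app _ _ _ (or_introl Hp)))).
      assert (K2 := H4 (fun p Hp => H p (in_or_app _ _ _ (or_intror Hp)))). tauto.
  - destruct IHchi1 as [H1 H2], IHchi2 as [H3 H4]; split; intros H.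
    + assert (K1 := H1 (fun p Hp => H p (in_or_app _ _ _ (or_introl Hp)))).
      assert (K2 := H3 (fun p Hp => H p (in_or_app _ _ _ (or_intror Hp)))).
      split.
      * intros v u [-> ->] Ha; tauto.
      * intros Hi; apply (proj2 K2); apply (Hi wA wB); simpl; tauto.
    + assert (K1 := H2 (fun p Hp => H p (in_or_app _ _ _ (or_introl Hp)))).
      assert (K2 := H4 (fun p Hp => H p (in_or_app _ _ _ (or_intror Hp)))).
      split.
      * intros Hi; apply (proj1 K2); apply (Hi wB wA); simpl; tauto.
      * intros v u [-> ->] Ha; tauto.
  - destruct IHchi1 as [H1 H2], IHchi2 as [H3 H4]; split; intros H.
    + assert (K2 := H3 (fun p Hp => H p (in_or_app _ _ _ (or_intror Hp)))).
      split.
      * intros v Hv; simpl in Hv; subst; tauto.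
      * intros Hi; apply (proj2 K2); apply Hi; simpl; auto.
    + assert (K2 := H4 (fun p Hp => H p (in_or_app _ _ _ (or_intror Hp)))).
      split.
      * intros Hi; apply (proj1 K2); apply Hi; simpl; auto.
      * intros v Hv; simpl in Hv; subst; tauto.
  - destruct IHchi as [H1 H2]; split; intros H.
    + destruct (H1 H); split; [intros v ->; auto | intros Hi; apply H3, Hi; auto].
    + destruct (H2 H); split; [intros Hi; apply H0, Hi; auto | intros v ->; auto].
Qed.

Lemma CM_JRC : JRC_model CM.
Proof.
  split; [|split].
  - intros w a v Hw Hr; simpl in *; subst w. apply sat_tt.
    destruct Hr as [[-> Ht] | [-> ->]]; auto.
    apply (proj1 (purity phi)); auto.
  - intros w a Hs; apply sat_tt in Hs; destruct w; simpl; auto.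
  - intros s t w v H; simpl in *; auto.
Qed.

End Counter.

Theorem mainTheorem16 : forall phi psi : form,
  JRC_valid (FRel phi psi) ->
  exists p : atom, In p (atoms phi) /\ In p (atoms psi).
Proof.
  intros phi psi Hv.
  apply NNPP; intros Hn.
  assert (Hd : forall p, In p (atoms psi) -> ~ In p (atoms phi)).
  { intros p Hp Hq; apply Hn; eauto. }
  specialize (Hv (CM phi) (CM_JRC phi) wN eq_refl).
  simpl in Hv.
  assert (Ht : sat (CM phi) wA psi).
  { apply Hv. simpl. right; auto. }
  apply sat_tt in Ht.
  apply (proj1 (proj2 (purity phi psi) Hd)); exact Ht.
Qed.
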